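(* Let $0<p<1$ be fixed, $b=1/(1-p)$, and $c=c(n)=\lfloor \log_b n-\log_b[(\log_b n)(\log n)]\rfloor+2$. Let $X_c$ be the number of $c$-element vertex sets of $G(n,p,c)$ that are both dominating and tropical. Then $\mathbb{E}(X_c)\to\infty$ as $n\to\infty$.
   Context: $G(n,p)$ is the random graph on $n$ vertices in which each of the $\binom n2$ edges is present independently with probability $p$. For a positive integer $c$, $G(n,p,c)$ is obtained from $G(n,p)$ by colouring each vertex with one of the colours $1,\dots,c$ uniformly at random, independently of each other and of the edges. A vertex set is tropical if every one of the $c$ colours appears on at least one of its vertices. $\log$ denotes the natural logarithm. *)

(* Defs.v *)
From Stdlib Require Import Reals.
From mathcomp Require Import all_boot.

Set Implicit Arguments.
Unset Strict Implicit.
Unset Printing Implicit Defensive.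

(* Vertices of G(n,p,c) are 'I_n.  A graph is an edge set E of pairs (u,v) with u < v
   (so each unordered pair {u,v} is encoded once). *)
Definition upper_pairs (n : nat) : {set 'I_n * 'I_n} := [set x : 'I_n * 'I_n | (nat_of_ord x.1 < nat_of_ord x.2)%N].

Definition adj (n : nat) (E : {set 'I_n * 'I_n}) (u v : 'I_n) : bool :=
  ((u, v) \in E) || ((v, u) \in E).

Definition dominating (n : nat) (E : {set 'I_n * 'I_n}) (S : {set 'I_n}) : bool :=
  [forall v : 'I_n, (v \in S) || [exists u in S, adj E u v]].

Definition tropical (n c : nat) (col : {ffun 'I_n -> 'I_c}) (S : {set 'I_n}) : bool :=
  [forall k : 'I_c, [exists v in S, col v == k]].

Definition X_count (n c k : nat) (E : {set 'I_n * 'I_n}) (col : {ffun 'I_n -> 'I_c}) : nat :=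
  #|[set S : {set 'I_n} | [&& #|S| == k, dominating E S & tropical col S]]|.

Local Open Scope R_scope.

Definition graph_weight (n : nat) (p : R) (E : {set 'I_n * 'I_n}) : R :=
  p ^ #|E| * (1 - p) ^ ('C(n, 2) - #|E|).

Definition colour_weight (n c : nat) : R := (/ INR c) ^ n.

Definition E_X (n c k : nat) (p : R) : R :=
  \big[Rplus/0]_(E : {set 'I_n * 'I_n} | E \subset upper_pairs n)
    \big[Rplus/0]_(col : {ffun 'I_n -> 'I_c})
      (graph_weight p E * colour_weight n c * INR (X_count k E col)).

(* floor x: up x is the unique integer with x < up x <= x + 1. *)
Definition floorR (x : R) : Z := (up x - 1)%Z.

Definition logb (b x : R) : R := ln x / ln b.

Definition c_of (p : R) (n : nat) : Z :=
  let b := / (1 - p) in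
  (floorR (logb b (INR n) - logb b (logb b (INR n) * ln (INR n))) + 2)%Z.

(* Main.v *)
Require Import Defs.
From HB Require Import structures.
From Stdlib Require Import Reals Lra Psatz ZArith.
From mathcomp Require Import all_boot zify.

Set Implicit Arguments.
Unset Strict Implicit.
Unset Printing Implicit Defensive.

Local Open Scope R_scope.

Lemma Rplus_0_l' : left_id 0 Rplus. Proof. move=> x; lra. Qed.
Lemma Rplus_assoc' : associative Rplus. Proof. move=> x y z; lra. Qed.
Lemma Rplus_comm' : commutative Rplus. Proof. move=> x y; lra. Qed.
Lemma Rmult_1_l' : left_id 1 Rmult. Proof. move=> x; ring. Qed.
Lemma Rmult_assoc' : associative Rmult. Proof. move=> x y z; ring. Qed.
Lemma Rmult_comm' : commutative Rmult. Proof. move=> x y; ring. Qed.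
Lemma Rmult_0_l' : left_zero 0 Rmult. Proof. move=> x; ring. Qed.
Lemma Rmult_0_r' : right_zero 0 Rmult. Proof. move=> x; ring. Qed.
Lemma Rdistl' : left_distributive Rmult Rplus. Proof. move=> x y z; ring. Qed.
Lemma Rdistr' : right_distributive Rmult Rplus. Proof. move=> x y z; ring. Qed.

HB.instance Definition _ := Monoid.isComLaw.Build R 0 Rplus Rplus_assoc' Rplus_comm' Rplus_0_l'.
HB.instance Definition _ := Monoid.isComLaw.Build R 1 Rmult Rmult_assoc' Rmult_comm' Rmult_1_l'.
HB.instance Definition _ := Monoid.isMulLaw.Build R 0 Rmult Rmult_0_l' Rmult_0_r'.
HB.instance Definition _ := Monoid.isAddLaw.Build R Rmult Rplus Rdistl' Rdistr'.


Lemma powD (x : R) (m n : nat) : x ^ (m + n)%N = x ^ m * x ^ n.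
Proof. exact: pow_add. Qed.

Lemma Rsum_le (I : Type) (r : seq I) (P : pred I) (F G : I -> R) :
  (forall i, P i -> F i <= G i) ->
  \big[Rplus/0]_(i <- r | P i) F i <= \big[Rplus/0]_(i <- r | P i) G i.
Proof.
move=> H; apply: (big_ind2 (fun x y => x <= y)) => //; first lra.
move=> *; lra.
Qed.

Lemma Rsum_ge0 (I : Type) (r : seq I) (P : pred I) (F : I -> R) :
  (forall i, P i -> 0 <= F i) -> 0 <= \big[Rplus/0]_(i <- r | P i) F i.
Proof.
move=> H; apply: (big_ind (fun x => 0 <= x)) => //; first lra.
move=> *; lra.
Qed.

Lemma Rprod_le (I : Type) (r : seq I) (P : pred I) (F G : I -> R) :
  (forall i, P i -> 0 <= F i <= G i) ->
  0 <= \big[Rmult/1]_(i <- r | P i) F i <= \big[Rmult/1]_(i <- r | P i) G i.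
Proof.
move=> H; apply: (big_ind2 (fun x y => 0 <= x <= y)) => //; first lra.
move=> x1 x2 y1 y2 [h1 h2] [h3 h4]; split; first exact: Rmult_le_pos.
apply: Rmult_le_compat => //.
Qed.

Lemma INR_sum (I : Type) (r : seq I) (P : pred I) (F : I -> nat) :
  INR (\sum_(i <- r | P i) F i) = \big[Rplus/0]_(i <- r | P i) INR (F i).
Proof.
apply: (big_morph INR) => //.
move=> x y; exact: plus_INR.
Qed.

Section ExSec.
Variable T : finType.
Variables p q : R.

Definition Ex (U : {set T}) (g : {set T} -> R) : R :=
  \big[Rplus/0]_(E : {set T} | E \subset U) (p ^ #|E| * q ^ #|U :\: E| * g E).

Lemma Ex_ext (U : {set T}) (g g' : {set T} -> R) : (forall E : {set T}, E \subset U -> g E = g' E) -> Ex U g = Ex U g'.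
Proof. move=> H; apply: eq_bigr => E hE; by rewrite H. Qed.

Lemma Ex_scale (U : {set T}) (g : {set T} -> R) (a : R) : Ex U (fun E => g E * a) = Ex U g * a.
Proof. rewrite /Ex big_distrl /=; apply: eq_bigr => E _; ring. Qed.

Lemma Ex_fubini (A B : {set T}) (g : {set T} -> R) :
  (forall x, x \in A -> x \notin B) ->
  Ex (A :|: B) g = Ex A (fun E1 => Ex B (fun E2 => g (E1 :|: E2))).
Proof.
move=> hAB.
rewrite /Ex.
have -> : \big[Rplus/0]_(E1 : {set T} | E1 \subset A)
     (p ^ #|E1| * q ^ #|A :\: E1| *
      \big[Rplus/0]_(E2 : {set T} | E2 \subset B) (p ^ #|E2| * q ^ #|B :\: E2| * g (E1 :|: E2)))
   = \big[Rplus/0]_(E1 : {set T} | E1 \subset A) \big[Rplus/0]_(E2 : {set T} | E2 \subset B)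
     (p ^ #|E1| * q ^ #|A :\: E1| * (p ^ #|E2| * q ^ #|B :\: E2| * g (E1 :|: E2))).
  by apply: eq_bigr => E1 _; rewrite big_distrr.
rewrite pair_big /=.
rewrite (reindex_onto (fun j : {set T} * {set T} => j.1 :|: j.2)
                      (fun E => (E :&: A, E :&: B))) /=; last first.
  move=> E /subsetP hE; apply/setP => x; rewrite !inE.
  by case hx: (x \in E) => //=; move: (hE x hx); rewrite inE.
apply: eq_big.
  move=> [E1 E2] /=.
  apply/idP/idP.
    move/andP=> [_ /eqP [h1 h2]].
    by rewrite -h1 -h2 !subsetIr.
  move/andP=> [/subsetP s1 /subsetP s2].
  apply/andP; split.
    apply/subsetP => x; rewrite !inE => /orP [/s1 -> // | /s2 ->]; by rewrite orbT.
  apply/eqP; congr pair; apply/setP => x; rewrite !inE.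
    case h1: (x \in E1); first by rewrite (s1 _ h1).
    case h2: (x \in E2) => //=; have := hAB x; have := s2 _ h2.
    move=> hB; case hA: (x \in A) => //; by rewrite (negbTE (hAB x hA)) in hB.
  case h2: (x \in E2); first by rewrite (s2 _ h2) orbT.
  case h1: (x \in E1) => //=; have := hAB x (s1 _ h1); by case: (x \in B).
move=> [E1 E2] /= /andP [_ /eqP [e1 e2]].
have s1 : {subset E1 <= A}.
  by move=> x hx; move: hx; rewrite -{1}e1 inE => /andP [_ ->].
have s2 : {subset E2 <= B}.
  by move=> x hx; move: hx; rewrite -{1}e2 inE => /andP [_ ->].
have dE : forall x, x \in E1 -> x \notin E2.
  move=> x /s1 /hAB hB; apply/negP => /s2; by rewrite (negbTE hB).
have cU : forall X Y : {set T}, (forall x, x \in X -> x \notin Y) ->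
    #|X :|: Y| = (#|X| + #|Y|)%N.
  move=> X Y hXY; rewrite cardsU.
  have -> : X :&: Y = set0.
    apply/setP => x; rewrite !inE; case hx: (x \in X) => //=; exact: negbTE (hXY x hx).
  by rewrite cards0 subn0.
rewrite cU // .
have -> : (A :|: B) :\: (E1 :|: E2) = (A :\: E1) :|: (B :\: E2).
  apply/setP => x; rewrite !inE.
  case hA: (x \in A); case hB: (x \in B); case h1: (x \in E1); case h2: (x \in E2) => //=.
  all: try first [by have := hAB x hA; rewrite hB | by have := s2 x h2; rewrite hB | by have := s1 x h1; rewrite hA].
rewrite cU; last first.
  move=> x; rewrite !inE => /andP [_ hA]; apply/negP => /andP [_ hB].
  by have := hAB x hA; rewrite hB.
rewrite !powD; ring.
Qed.

Lemma Ex_set0 (g : {set T} -> R) : Ex set0 g = g set0.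
Proof.
rewrite /Ex (bigD1 set0) ?sub0set //= big1; last first.
  by move=> E /andP [hE hne]; move: hE; rewrite subset0 => hE; rewrite hE in hne.
by rewrite cards0 setD0 cards0 /=; ring.
Qed.

Lemma Ex_single (x : T) (g : {set T} -> R) : Ex [set x] g = p * g [set x] + q * g set0.
Proof.
rewrite /Ex (bigD1 set0) ?sub0set //= (bigD1 [set x]) /=; last first.
  rewrite subxx /=; apply/set0Pn; exists x; by rewrite inE.
rewrite big1; last first.
  move=> E /andP [/andP [hE h0] h1]; move: hE; rewrite subset1 => /orP [] hE.
    by rewrite hE in h1.
  by rewrite hE in h0.
rewrite cards0 setD0 cards1 setDv cards0 /=; ring.
Qed.

Lemma Ex_one (U : {set T}) : p + q = 1 -> Ex U (fun _ => 1) = 1.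
Proof.
move=> hpq.
elim: {U}#|U| {-2}U (eqxx #|U|) => [|k IH] U hU.
  move: hU; rewrite cards_eq0 => /eqP ->; by rewrite Ex_set0.
have : (0 < #|U|)%N by rewrite (eqP hU).
move/card_gt0P => [x hx].
have -> : U = [set x] :|: (U :\ x) by rewrite setD1K.
rewrite Ex_fubini; last by move=> y; rewrite !inE => /eqP ->; rewrite eqxx.
rewrite Ex_single !IH //.
  lra.
by rewrite (cardsD1 x U) hx add1n in hU.
Qed.

Lemma Ex_empty (U : {set T}) : Ex U (fun E => if E == set0 then 1 else 0) = q ^ #|U|.
Proof.
rewrite /Ex (bigD1 set0) ?sub0set //= big1; last first.
  by move=> E /andP [_ /negbTE ->]; ring.
rewrite eqxx cards0 setD0 /=; ring.
Qed.

Lemma Ex_add (U : {set T}) (f g : {set T} -> R) : Ex U (fun E => f E + g E) = Ex U f + Ex U g.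
Proof. rewrite /Ex -big_split /=; apply: eq_bigr => E _; ring. Qed.


Lemma Ex_prod (I : eqType) (s : seq I) (P : I -> {set T})
    (h : I -> {set T} -> R) (U : {set T}) :
  p + q = 1 -> uniq s -> (forall v, v \in s -> P v \subset U) ->
  (forall v w, v \in s -> w \in s -> v != w -> forall x, x \in P v -> x \notin P w) ->
  Ex U (fun E => \big[Rmult/1]_(v <- s) h v (E :&: P v)) =
  \big[Rmult/1]_(v <- s) Ex (P v) (h v).
Proof.
move=> hpq.
elim: s U => [|v s IH] U hu hsub hdis.
  rewrite big_nil; transitivity (Ex U (fun _ => 1)); last exact: Ex_one.
  apply: Ex_ext => E _; by rewrite big_nil.
rewrite big_cons.
move: hu => /= /andP [vns us].
have hPv : P v \subset U by apply: hsub; rewrite inE eqxx.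
have -> : U = P v :|: (U :\: P v).
  apply/setP => x; rewrite !inE; case hx: (x \in P v) => //=.
  by rewrite (subsetP hPv x hx).
rewrite Ex_fubini; last by move=> x hx; rewrite !inE hx.
transitivity (Ex (P v) (fun E1 => (\big[Rmult/1]_(w <- s) Ex (P w) (h w)) * h v E1)).
  apply: Ex_ext => E1 /subsetP s1.
  transitivity (Ex (U :\: P v) (fun E2 => (\big[Rmult/1]_(w <- s) h w (E2 :&: P w)) * h v E1)).
    apply: Ex_ext => E2 /subsetP s2.
    rewrite big_cons.
    have -> : (E1 :|: E2) :&: P v = E1.
      apply/setP => x; rewrite !inE.
      case h1: (x \in E1); first by rewrite (s1 x h1).
      case h2: (x \in E2) => //=; move: (s2 x h2); rewrite inE; by case: (x \in P v).
    rewrite Rmult_comm; congr Rmult.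
    rewrite big_seq_cond [in RHS]big_seq_cond; apply: eq_bigr => w /andP [ws _].
    congr h; apply/setP => x; rewrite !inE.
    case h1: (x \in E1) => //=.
    have vw : v != w by apply/eqP => e; move: vns; rewrite e ws.
    have := hdis v w; rewrite inE eqxx /= inE ws orbT => /(_ isT isT vw x (s1 x h1)).
    move/negbTE => ->; by rewrite andbF.
  rewrite Ex_scale IH //.
    move=> w ws; apply/subsetP => x hx; rewrite !inE.
    have vw : v != w by apply/eqP => e; move: vns; rewrite e ws.
    rewrite (subsetP (hsub w _) x hx); last by rewrite inE ws orbT.
    have := hdis w v; rewrite inE ws orbT inE eqxx /= eq_sym.
    by move=> /(_ isT isT vw x hx) ->.
  move=> a b ha hb ab; apply: hdis => //; by rewrite inE (ha, hb) orbT.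
rewrite (Ex_ext (g' := fun E1 => h v E1 * (\big[Rmult/1]_(w <- s) Ex (P w) (h w)))); last first.
  move=> E _; exact: Rmult_comm.
by rewrite Ex_scale.
Qed.

End ExSec.

Lemma card_upper n : #|upper_pairs n| = 'C(n, 2).
Proof.
rewrite -[n in 'C(n, _)]card_ord -card_draws.
have inj : {in upper_pairs n &, injective (fun x : 'I_n * 'I_n => [set x.1; x.2])}.
  move=> [a b] [c d]; rewrite !inE /= => hab hcd e.
  have ha : a \in [set c; d] by rewrite -e !inE eqxx.
  have hb : b \in [set c; d] by rewrite -e !inE eqxx orbT.
  have hc : c \in [set a; b] by rewrite e !inE eqxx.
  move: ha hb hc; rewrite !inE => /orP [] /eqP ha /orP [] /eqP hb /orP [] /eqP hc; subst => //.
  all: try (exfalso; move: hab hcd; rewrite ?ltnn //; lia).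
rewrite -(card_in_imset inj); apply: eq_card => A; rewrite !inE.
apply/imsetP/cards2P.
  move=> [[a b]]; rewrite inE /= => hab ->; exists a, b; split => //.
  apply/eqP => e; by rewrite e ltnn in hab.
move=> [x [y [hxy ->]]].
have : (nat_of_ord x != nat_of_ord y) by [].
rewrite neq_ltn => /orP [] h.
  exists (x, y); by rewrite ?inE.
exists (y, x); first by rewrite inE.
by rewrite /= setUC.
Qed.

Definition Pv n (S : {set 'I_n}) (v : 'I_n) : {set 'I_n * 'I_n} :=
  [set x in upper_pairs n | ((x.1 == v) && (x.2 \in S)) || ((x.2 == v) && (x.1 \in S))].

Lemma Pv_sub n (S : {set 'I_n}) v : Pv S v \subset upper_pairs n.
Proof. apply/subsetP => x; rewrite inE => /andP []. done. Qed.

Lemma Pv_disj n (S : {set 'I_n}) v w :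
  v \notin S -> w \notin S -> v != w -> forall x, x \in Pv S v -> x \notin Pv S w.
Proof.
move=> vS wS vw [a b]; rewrite !inE /= => /andP [_ h]; apply/negP => /andP [_ h'].
move: h h'.
case/orP => /andP [/eqP ea hb]; case/orP => /andP [/eqP ea' hb']; subst.
- by rewrite eqxx in vw.
- by rewrite hb' in vS.
- by rewrite hb' in vS.
- by rewrite eqxx in vw.
Qed.

Lemma Pv_card n (S : {set 'I_n}) v : v \notin S -> (#|S| <= #|Pv S v|)%N.
Proof.
move=> vS.
pose f := fun u : 'I_n => if (nat_of_ord u < nat_of_ord v)%N then (u, v) else (v, u).
have inj : {in S &, injective f}.
  move=> u1 u2 h1 h2; rewrite /f.
  case: ifP => _; case: ifP => _ [].
  - done.
  - by move=> e1 e2; subst; rewrite h1 in vS.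
  - by move=> e1 e2; subst; rewrite h2 in vS.
  - done.
rewrite -(card_in_imset inj); apply: subset_leq_card.
apply/subsetP => x /imsetP [u hu ->]; rewrite /f !inE.
have uv : nat_of_ord u != nat_of_ord v.
  apply/eqP => e; have e' : u = v by apply: val_inj.
  by rewrite -e' hu in vS.
case: ifP => h /=; rewrite ?h ?eqxx ?hu ?orbT //.
by move: h uv; rewrite neq_ltn => -> /= ->.
Qed.

Lemma dom_iff n (E : {set 'I_n * 'I_n}) (S : {set 'I_n}) :
  E \subset upper_pairs n ->
  dominating E S = all (fun v => E :&: Pv S v != set0) (enum (~: S)).
Proof.
move=> /subsetP hE.
apply/forallP/allP.
  move=> h v; rewrite mem_enum inE => vS.
  move: (h v); rewrite (negbTE vS) /= => /existsP [u /andP [uS]].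
  rewrite /adj => /orP [] huv; apply/set0Pn.
    exists (u, v); rewrite !inE huv /=.
    have := hE _ huv; rewrite inE /= => ->; by rewrite eqxx uS orbT.
  exists (v, u); rewrite !inE huv /=.
  have := hE _ huv; rewrite inE /= => ->; by rewrite eqxx uS.
move=> h v; case vS: (v \in S) => //=.
have := h v; rewrite mem_enum inE vS => /(_ isT) /set0Pn [[a b]].
rewrite !inE /= => /andP [hab /andP [_ /orP [] /andP [/eqP ea hb]]]; subst;
  apply/existsP.
  exists b; rewrite hb /= /adj hab; by rewrite orbT.
exists a; by rewrite hb /= /adj hab.
Qed.

Lemma pow_le1 (x : R) (d : nat) : 0 <= x <= 1 -> x ^ d <= 1.
Proof. move=> h; rewrite -(pow1 d); apply: pow_incr; lra. Qed.

Lemma pow_decr (x : R) (k m : nat) : 0 <= x <= 1 -> (k <= m)%N -> x ^ m <= x ^ k.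
Proof.
move=> h /subnKC <-; rewrite powD.
have := pow_le1 (m - k) h; have := pow_le x k (proj1 h); nra.
Qed.

Lemma prod_ind (I : Type) (r : seq I) (b : pred I) :
  \big[Rmult/1]_(i <- r) (if b i then 1 else 0) = if all b r then 1 else 0.
Proof.
elim: r => [|i r IH]; first by rewrite big_nil.
rewrite big_cons IH /=; case: (b i); case: (all b r) => /=; ring.
Qed.

Lemma prod_const (I : Type) (r : seq I) (a : R) :
  \big[Rmult/1]_(i <- r) a = a ^ size r.
Proof.
elim: r => [|i r IH]; first by rewrite big_nil.
by rewrite big_cons IH.
Qed.

Lemma dom_bound n (S : {set 'I_n}) p : 0 < p < 1 ->
  (1 - (1 - p) ^ #|S|) ^ (n - #|S|) <=
  \big[Rplus/0]_(E : {set 'I_n * 'I_n} | E \subset upper_pairs n)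
     (graph_weight p E * (if dominating E S then 1 else 0)).
Proof.
move=> hp.
set q := 1 - p.
have hpq : p + q = 1 by rewrite /q; ring.
have -> : \big[Rplus/0]_(E : {set 'I_n * 'I_n} | E \subset upper_pairs n)
     (graph_weight p E * (if dominating E S then 1 else 0))
   = Ex p q (upper_pairs n) (fun E => if dominating E S then 1 else 0).
  rewrite /Ex; apply: eq_bigr => E hE.
  rewrite /graph_weight cardsD (setIidPr hE) card_upper.
  by rewrite -/q.
set hh := fun F : {set 'I_n * 'I_n} => if F != set0 then 1 else 0.
rewrite (Ex_ext p q (g' := fun E => \big[Rmult/1]_(v <- enum (~: S)) hh (E :&: Pv S v))); last first.
  move=> E hE; rewrite (dom_iff S hE) /hh prod_ind //.
rewrite (@Ex_prod _ p q _ (enum (~: S)) (Pv S) (fun _ => hh)) //; first last.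
- move=> v w; rewrite !mem_enum !inE; exact: Pv_disj.
- move=> v _; exact: Pv_sub.
- exact: enum_uniq.
have eP : forall v, Ex p q (Pv S v) hh = 1 - q ^ #|Pv S v|.
  move=> v.
  have := @Ex_one _ p q (Pv S v) hpq.
  rewrite (Ex_ext p q (g' := fun E => (if E == set0 then 1 else 0) + hh E)); last first.
    move=> E _; rewrite /hh; case: (E == set0) => /=; ring.
  rewrite Ex_add Ex_empty; lra.
rewrite (eq_big_seq (fun v => 1 - q ^ #|Pv S v|)); last by move=> v _; rewrite eP.
have hq : 0 <= q <= 1 by rewrite /q; lra.
have -> : (1 - q ^ #|S|) ^ (n - #|S|) = \big[Rmult/1]_(v <- enum (~: S)) (1 - q ^ #|S|).
  by rewrite prod_const -cardE [#|~: S|]cardsCs setCK card_ord.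
have H : forall v, v \in enum (~: S) -> 0 <= 1 - q ^ #|S| <= 1 - q ^ #|Pv S v|.
  move=> v; rewrite mem_enum inE => vS; split.
    have := pow_le1 #|S| hq; lra.
  have := pow_decr hq (Pv_card vS); lra.
rewrite !big_seq. exact: (proj2 (@Rprod_le _ _ _ (fun _ => 1 - q ^ #|S|) (fun v => 1 - q ^ #|Pv S v|) H)).
Qed.

Lemma INR_expn (a k : nat) : INR (a ^ k)%N = INR a ^ k.
Proof.
elim: k => [|k IH]; first done.
rewrite expnS /=; rewrite -IH; exact: mult_INR.
Qed.

Lemma trop_bound n m (S : {set 'I_n}) : #|S| = m.+1 ->
  (/ INR m.+1) ^ m.+1 <=
  \big[Rplus/0]_(col : {ffun 'I_n -> 'I_m.+1})
     (colour_weight n m.+1 * (if tropical col S then 1 else 0)).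
Proof.
move=> hS.
pose col0 := fun x : 'I_n => (inord (index x (enum S)) : 'I_m.+1).
pose F := fun x : 'I_n => if x \in S then (pred1 (col0 x) : pred 'I_m.+1) else predT.
pose A := (family F : simpl_pred {ffun 'I_n -> 'I_m.+1}).
have x0 : 'I_n.
  have : (0 < #|S|)%N by rewrite hS.
  by move/card_gt0P => /sigW [x _].
have tropA : forall col, col \in A -> tropical col S.
  move=> col /familyP hcol; apply/forallP => k; apply/existsP.
  have kS : (k < size (enum S))%N by rewrite -cardE hS ltn_ord.
  exists (nth x0 (enum S) k).
  have vS : nth x0 (enum S) k \in S by rewrite -mem_enum mem_nth.
  rewrite vS /=.
  have := hcol (nth x0 (enum S) k); rewrite /F vS /= => /eqP ->.
  rewrite /col0 index_uniq ?enum_uniq //.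
  by apply/eqP; apply: val_inj; rewrite /= inordK.
have cardA : #|A| = (m.+1 ^ (n - m.+1))%N.
  rewrite card_family foldrE big_map big_enum /=.
  rewrite (eq_bigr (fun x => if x \in S then 1%N else m.+1)); last first.
    move=> x _; rewrite /F; case: (x \in S); first exact: card1.
    by rewrite card_ord.
  rewrite (bigID (fun i => i \in S)) /= big1; last by move=> i ->.
  rewrite mul1n (eq_bigr (fun _ => m.+1)); last by move=> i /negbTE ->.
  rewrite prod_nat_const.
  congr (_ ^ _)%N.
  have hc := cardsC S; rewrite card_ord in hc.
  have -> : #|[pred i | i \notin S]| = #|~: S| by apply: eq_card => x; rewrite !inE.
  lia.
have hn : (m.+1 <= n)%N by have := subset_leq_card (subsetT S); rewrite cardsT card_ord hS.
have eA : \big[Rplus/0]_(col : {ffun 'I_n -> 'I_m.+1})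
     (colour_weight n m.+1 * (if col \in A then 1 else 0))
   = colour_weight n m.+1 * INR #|A|.
  rewrite -big_distrr /=; congr Rmult.
  rewrite -sum1_card INR_sum [RHS]big_mkcond /=; by apply: eq_bigr => col _.
apply: Rle_trans (_ : \big[Rplus/0]_(col : {ffun 'I_n -> 'I_m.+1})
     (colour_weight n m.+1 * (if col \in A then 1 else 0)) <= _).
  rewrite eA cardA INR_expn /colour_weight.
  have ha : INR m.+1 <> 0 by apply: not_0_INR.
  rewrite -(subnKC hn) powD addKn.
  rewrite Rmult_assoc -Rpow_mult_distr Rinv_l // pow1 Rmult_1_r; exact: Rle_refl.
apply: Rsum_le => col _.
have hw : 0 <= colour_weight n m.+1.
  rewrite /colour_weight; apply: pow_le; apply: Rlt_le; apply: Rinv_0_lt_compat.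
  apply: lt_0_INR; apply/ltP; done.
case hA: (col \in A); first by rewrite (tropA _ hA); lra.
case: (tropical col S); lra.
Qed.

Lemma INR_card_set (T : finType) (b : pred T) :
  INR #|[set x | b x]| = \big[Rplus/0]_(x : T) (if b x then 1 else 0).
Proof.
rewrite -sum1_card INR_sum [LHS]big_mkcond /=; apply: eq_bigr => x _.
by rewrite inE.
Qed.

Lemma EX_bound n m p : 0 < p < 1 ->
  INR 'C(n, m.+1) * ((1 - (1 - p) ^ m.+1) ^ (n - m.+1) * (/ INR m.+1) ^ m.+1)
  <= E_X n m.+1 m.+1 p.
Proof.
move=> hp.
set K := (1 - (1 - p) ^ m.+1) ^ (n - m.+1) * (/ INR m.+1) ^ m.+1.
rewrite /E_X /X_count.
under eq_bigr => E _ do under eq_bigr => col _ do rewrite INR_card_set big_distrr /=.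
under eq_bigr => E _ do rewrite exchange_big /=.
rewrite exchange_big /=.
rewrite -[n in 'C(n, _)]card_ord -card_draws INR_card_set big_distrl /=.
apply: Rsum_le => S _.
case hS: (#|S| == m.+1) => /=; last first.
  rewrite Rmult_0_l; apply: Rsum_ge0 => E _; apply: Rsum_ge0 => col _; rewrite Rmult_0_r; lra.
rewrite Rmult_1_l.
have -> : \big[Rplus/0]_(E : {set 'I_n * 'I_n} | E \subset upper_pairs n)
     \big[Rplus/0]_(col : {ffun 'I_n -> 'I_m.+1})
       (graph_weight p E * colour_weight n m.+1 *
        (if dominating E S && tropical col S then 1 else 0))
   = (\big[Rplus/0]_(E : {set 'I_n * 'I_n} | E \subset upper_pairs n)
        (graph_weight p E * (if dominating E S then 1 else 0))) *
     (\big[Rplus/0]_(col : {ffun 'I_n -> 'I_m.+1})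
        (colour_weight n m.+1 * (if tropical col S then 1 else 0))).
  rewrite big_distrl /=; apply: eq_bigr => E _.
  rewrite big_distrr /=; apply: eq_bigr => col _.
  case: (dominating E S); case: (tropical col S); rewrite /=; ring.
have h1 := dom_bound S hp.
have h2 := trop_bound (eqP hS).
rewrite (eqP hS) in h1.
rewrite /K; apply: Rmult_le_compat => //.
- apply: pow_le; have := pow_le1 m.+1 (_ : 0 <= 1 - p <= 1); lra.
- apply: pow_le; apply: Rlt_le; apply: Rinv_0_lt_compat; apply: lt_0_INR; apply/ltP; done.
Qed.

Lemma fact_le_exp c : (c`! <= c ^ c)%N.
Proof.
elim: c => [|c IH] //.
rewrite factS expnS leq_mul2l /=.
apply: leq_trans IH _.
case: c => [|c] //; by rewrite leq_exp2r.
Qed.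

Lemma ffact_ge n c : ((n - c) ^ c <= n ^_ c)%N.
Proof.
rewrite ffact_prod.
have := @leq_prod _ (index_enum 'I_c) xpredT (fun _ => n - c)%N (fun i : 'I_c => n - i)%N.
rewrite prod_nat_const card_ord; apply => i _.
apply: leq_sub2l; exact: ltnW.
Qed.

Lemma binom_lb n c : ((n - c) ^ c <= 'C(n, c) * c ^ c)%N.
Proof.
apply: leq_trans (ffact_ge n c) _.
rewrite -bin_ffact leq_mul2l fact_le_exp orbT //.
Qed.
Lemma ln_le' x y : 0 < x -> x <= y -> ln x <= ln y.
Proof.
move=> hx [hxy|<-]; last by apply: Rle_refl.
by apply: Rlt_le; apply: ln_increasing.
Qed.

Lemma exp_le' x y : x <= y -> exp x <= exp y.
Proof.
move=> [hxy|<-]; last by apply: Rle_refl.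
by apply: Rlt_le; apply: exp_increasing.
Qed.

Lemma ln_ge0 x : 1 <= x -> 0 <= ln x.
Proof. move=> h; rewrite -ln_1; apply: ln_le'; lra. Qed.

Lemma ln_bound_k y k : 0 < y -> 0 < k -> ln y <= k * y - ln k.
Proof.
move=> hy hk.
have h := exp_ineq1_le (ln (k * y)).
rewrite exp_ln in h; last by nra.
rewrite ln_mult in h; lra.
Qed.

Lemma ln_bound y k : 0 < y -> 0 < k -> ln y <= k * y + Rabs (ln k).
Proof.
move=> hy hk; have := ln_bound_k hy hk.
have := Rle_abs (- ln k); rewrite Rabs_Ropp; lra.
Qed.

Lemma exp_cube s : 0 <= s -> s ^ 3 / 27 <= exp s.
Proof.
move=> hs.
have -> : exp s = exp (s / 3) ^ 3.
  have -> : exp (s / 3) ^ 3 = exp (s / 3 + s / 3 + s / 3) by rewrite !exp_plus /=; ring.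
  congr exp; field.
have h := exp_ineq1_le (s / 3).
have -> : s ^ 3 / 27 = (s / 3) ^ 3 by field.
apply: pow_incr; lra.
Qed.

Lemma ln2_lt1 : ln 2 < 1.
Proof.
have -> : 1 = ln (exp 1) by rewrite ln_exp.
apply: ln_increasing; first lra.
have := exp_ineq1 1; lra.
Qed.

Lemma Rdiv_le_0_compat a b : 0 <= a -> 0 < b -> 0 <= a / b.
Proof. move=> ha hb; apply: Rmult_le_pos => //; apply: Rlt_le; exact: Rinv_0_lt_compat. Qed.

Lemma AN (p lam M : R) : 0 < p < 1 -> 0 < lam -> exp (- lam) = 1 - p ->
  exists L0, 1 <= L0 /\ forall L cr, L0 <= L ->
   L - ln (L * (lam * L)) / lam + 1 < cr -> cr <= L - ln (L * (lam * L)) / lam + 2 ->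
   0 <= L - ln (L * (lam * L)) / lam /\ 1 <= cr /\ 2 * cr <= exp (lam * L) /\
   exp (- lam * cr) <= 1 / 2 /\
   M < cr * ln (exp (lam * L) - cr) - 2 * cr * ln cr
       - exp (lam * L) * (exp (- lam * cr) + 2 * exp (- lam * cr) ^ 2).
Proof.
move=> hp hlam hq.
set k := lam * p / (4 * (19 + lam)).
have hk : 0 < k by rewrite /k; apply: Rdiv_lt_0_compat; nra.
have hke : (19 + lam) * k = lam * p / 4 by rewrite /k; field; lra.
set C := Rabs (ln k).
have hC : 0 <= C by apply: Rabs_pos.
set B := 8 * C + ln 2.
have hl2 : 0 < ln 2 by rewrite -ln_1; apply: ln_increasing; lra.
have hB : 0 <= B by rewrite /B; lra.
set M' := Rabs M.
have hM : M <= M' by apply: Rle_abs.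
have hM0 : 0 <= M' by apply: Rabs_pos.
exists (1 + 1 / lam + 4 * C / lam + 162 / lam ^ 3 + 108 / (lam ^ 2 * p)
        + 4 * (M' + B + 1) / (lam * p)).
have d1 : 0 <= 1 / lam by apply: Rlt_le; apply: Rdiv_lt_0_compat; lra.
have d2 : 0 <= 4 * C / lam by apply: Rdiv_le_0_compat; nra.
have d3 : 0 <= 162 / lam ^ 3 by apply: Rdiv_le_0_compat; [lra| apply: pow_lt].
have d4 : 0 <= 108 / (lam ^ 2 * p) by apply: Rdiv_le_0_compat; [lra| nra].
have d5 : 0 <= 4 * (M' + B + 1) / (lam * p) by apply: Rdiv_le_0_compat; nra.
split; first lra.
move=> L cr hL.
have dv : forall a b, 0 < b -> 0 <= a / b -> a / b <= L -> a <= L * b.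
  move=> a b hb _ h.
  have -> : a = a / b * b by field; lra.
  by apply: Rmult_le_compat_r; lra.
have h1 : 1 <= L by lra.
have h2 : 1 <= L * lam by apply: dv => //; lra.
have h3 : 4 * C <= L * lam by apply: dv => //; lra.
have h4 : 162 <= L * lam ^ 3 by apply: dv => //; [apply: pow_lt|]; lra.
have h5 : 108 <= L * (lam ^ 2 * p) by apply: dv => //; [nra|]; lra.
have h6 : 4 * (M' + B + 1) <= L * (lam * p) by apply: dv => //; [nra|]; lra.
set t := lam * L.
have ht : 1 <= t by rewrite /t; lra.
have hLt : 1 <= L * t by rewrite /t; nra.
set lw := ln (L * t).
have hlw0 : 0 <= lw by apply: ln_ge0.
have hlw : lw <= k * (1 + lam) * L + 2 * C.
  rewrite /lw ln_mult; try lra.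
  have := @ln_bound L k ltac:(lra) hk; have := @ln_bound t k ltac:(lra) hk.
  rewrite /t /C; nra.
set W := lw / lam.
have hW : W * lam = lw by rewrite /W; field; lra.
have hW0 : 0 <= W by apply: Rdiv_le_0_compat; lra.
have hklam : k * (1 + lam) <= lam / 2.
  have : k * (1 + lam) <= (19 + lam) * k by nra.
  rewrite hke; nra.
have hlwL : lw <= lam * L by nra.
have hz : 0 <= L - W by nra.
move=> hcr1 hcr2.
have hc1 : 1 <= cr by lra.
have hc2 : cr <= L + 2 by lra.
have he := @exp_cube t ltac:(lra).
have hC3 : 2 * cr <= exp t.
  have : 162 <= L ^ 2 * lam ^ 3 by nra.
  rewrite /t in he *; nra.
set x := exp (- lam * cr).
have hx0 : 0 < x by apply: exp_pos.
have hxe : exp t * x <= (1 - p) * lam * L ^ 2.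
  rewrite /x -exp_plus.
  apply: Rle_trans (_ : exp (lw - lam) <= _).
    apply: exp_le'.
    have : lam * (L - W + 1) <= lam * cr by nra.
    rewrite /t; nra.
  rewrite /Rminus exp_plus hq exp_ln; last lra.
  rewrite /t; nra.
have hxp : x <= p / 4.
  have hE : 0 < exp t by apply: exp_pos.
  have hpos : 0 <= lam * L ^ 2 by nra.
  have h5' := Rmult_le_compat_r (lam * L ^ 2) _ _ hpos h5.
  have g1 : lam * L ^ 2 <= p / 4 * (t ^ 3 / 27) by rewrite /t; lra.
  have g2 : (1 - p) * lam * L ^ 2 <= lam * L ^ 2 by nra.
  have g3 : p / 4 * (t ^ 3 / 27) <= p / 4 * exp t by apply: Rmult_le_compat_l; lra.
  have g4 : x * exp t <= p / 4 * exp t by lra.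
  by apply: (Rmult_le_reg_r (exp t)).
split => //; split => //; split => //; split; first lra.
have hE : 0 < exp t by apply: exp_pos.
have hl2' := ln2_lt1.
have F1 : lam * L ^ 2 - lw * L - L * ln 2 <= cr * ln (exp t - cr).
  have hlnE : t - ln 2 <= ln (exp t - cr).
    have -> : t - ln 2 = ln (exp t * / 2) by rewrite ln_mult ?ln_Rinv ?ln_exp; lra.
    apply: ln_le'; lra.
  have g1 : cr * (t - ln 2) <= cr * ln (exp t - cr) by apply: Rmult_le_compat_l; lra.
  have g2 : (L - W) * (t - ln 2) <= cr * (t - ln 2) by apply: Rmult_le_compat_r; lra.
  have g3 : W * t = lw * L by rewrite /t -hW; ring.
  have g4 : 0 <= W * ln 2 by nra.
  have g5 : (L - W) * (t - ln 2) = lam * L ^ 2 - lw * L - L * ln 2 + W * ln 2.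
    rewrite /Rminus Rmult_plus_distr_r !Rmult_plus_distr_l.
    have : L * t = lam * L ^ 2 by rewrite /t; ring.
    nra.
  lra.
have F3 : cr * ln cr <= 9 * k * L ^ 2 + 3 * C * L.
  have g1 : ln cr <= ln (L + 2) by apply: ln_le'; lra.
  have g2 := @ln_bound (L + 2) k ltac:(lra) hk.
  have g3 : 0 <= ln cr by apply: ln_ge0.
  have g4 : cr * ln cr <= (L + 2) * (k * (L + 2) + C).
    apply: Rmult_le_compat; rewrite /C in g2 *; lra.
  have s1 : (L + 2) ^ 2 <= 9 * L ^ 2 by nra.
  have s2 : k * (L + 2) ^ 2 <= k * (9 * L ^ 2) by apply: Rmult_le_compat_l; lra.
  have s3 : C * (L + 2) <= C * (3 * L) by apply: Rmult_le_compat_l; lra.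
  lra.
have F4 : exp t * (x + 2 * x ^ 2) <= (1 - p) * lam * L ^ 2 * (1 + p / 2).
  have -> : exp t * (x + 2 * x ^ 2) = exp t * x * (1 + 2 * x) by ring.
  apply: Rmult_le_compat; nra.
have F2 : lw * L <= (k * (1 + lam) * L + 2 * C) * L by apply: Rmult_le_compat_r; lra.
have hke2 : (19 + lam) * k * L ^ 2 = lam * p / 4 * L ^ 2 by rewrite hke.
have h6' : (M' + B + 1) * L <= L * (lam * p) / 4 * L by apply: Rmult_le_compat_r; lra.
have hp2 : 0 <= lam * p ^ 2 * L ^ 2 by nra.
rewrite /B in h6'.
have h7 : (M' + 1) * 1 <= (M' + 1) * L by apply: Rmult_le_compat_l; lra.
lra.
Qed.

Lemma pow_exp y k : 0 < y -> y ^ k = exp (INR k * ln y).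
Proof. move=> hy; rewrite -ln_pow // exp_ln //; exact: pow_lt. Qed.

Lemma combo n c p : (1 <= c)%N -> 2 * INR c <= INR n -> 0 < p < 1 -> (1 - p) ^ c <= 1 / 2 ->
  exp (INR c * ln (INR n - INR c) - 2 * INR c * ln (INR c)
       - INR n * ((1 - p) ^ c + 2 * ((1 - p) ^ c) ^ 2))
  <= INR 'C(n, c) * ((1 - (1 - p) ^ c) ^ (n - c) * (/ INR c) ^ c).
Proof.
move=> hc hcn hp hx.
set x := (1 - p) ^ c.
have hx0 : 0 <= x by apply: pow_le; lra.
set cc := INR c in hcn *.
have hcc : 1 <= cc by rewrite /cc -/(INR 1); apply: le_INR; apply/leP.
have hcn' : (c <= n)%N by apply/leP; apply: INR_le; change (cc <= INR n); lra.
set A := INR n - cc.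
have hA : 0 < A by rewrite /A; lra.
have hbin : A ^ c <= INR 'C(n, c) * cc ^ c.
  have := le_INR _ _ (leP (binom_lb n c)).
  rewrite mult_INR !INR_expn minus_INR; last by apply/leP.
  done.
set y := x + 2 * x ^ 2.
have -> : cc * ln A - 2 * cc * ln cc - INR n * y
        = cc * ln A + cc * ln (/ cc) + cc * ln (/ cc) + INR n * ln (exp (- y)).
  rewrite ln_Rinv ?ln_exp; [ring | lra].
have hic : 0 < / cc by apply: Rinv_0_lt_compat; lra.
have hey : 0 < exp (- y) by apply: exp_pos.
rewrite !exp_plus -!pow_exp //.
have B1 : A ^ c * (/ cc) ^ c <= INR 'C(n, c).
  apply: Rle_trans (_ : INR 'C(n, c) * cc ^ c * (/ cc) ^ c <= _).
    apply: Rmult_le_compat_r => //; apply: pow_le; lra.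
  rewrite Rmult_assoc -Rpow_mult_distr Rinv_r ?pow1; lra.
have B2 : exp (- y) <= 1 - x.
  have e1 := exp_ineq1_le y.
  have e2 : exp (- y) * exp y = 1 by rewrite -exp_plus Rplus_opp_l exp_0.
  have e3 : 0 < exp (- y) := exp_pos _.
  have hx' : x <= 1 / 2 by exact: hx.
  have e6 : 0 <= x ^ 2 * (1 - 2 * x) by apply: Rmult_le_pos; [apply: pow2_ge_0 | lra].
  have e4 : 1 <= (1 - x) * (1 + y) by rewrite /y; lra.
  have e5 : (1 - x) * (1 + y) <= (1 - x) * exp y by apply: Rmult_le_compat_l; lra.
  nra.
have B3 : exp (- y) ^ n <= (1 - x) ^ (n - c).
  apply: Rle_trans (_ : (1 - x) ^ n <= _).
    apply: pow_incr; split => //; exact: Rlt_le (exp_pos _).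
  apply: pow_decr; [lra | exact: leq_subr].
have P1 : 0 <= A ^ c * (/ cc) ^ c by apply: Rmult_le_pos; apply: pow_le; lra.
have P2 : 0 <= (/ cc) ^ c by apply: pow_le; lra.
have P3 : 0 <= exp (- y) ^ n by apply: pow_le; exact: Rlt_le (exp_pos _).
have key : A ^ c * (/ cc) ^ c * (/ cc) ^ c * exp (- y) ^ n
    <= INR 'C(n, c) * (/ cc) ^ c * (1 - x) ^ (n - c).
  apply: Rmult_le_compat => //.
    exact: Rmult_le_pos.
  apply: Rmult_le_compat => //; exact: Rle_refl.
apply: Rle_trans key _; right; ring.
Qed.

Unset Implicit Arguments.

Theorem mainTheorem9 (p : R) (hp0 : Rlt 0 p) (hp1 : Rlt p 1) :
  forall M : R, exists N : nat, forall n : nat, (N <= n)%N ->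
    Rlt M (E_X n (Z.to_nat (c_of p n)) (Z.to_nat (c_of p n)) p).
Proof.
move=> M.
have hq : 0 < 1 - p < 1 by lra.
set lam := ln (/ (1 - p)).
have hlam : 0 < lam.
  rewrite /lam -ln_1; apply: ln_increasing; first lra.
  rewrite -Rinv_1; apply: Rinv_lt_contravar; lra.
have hlnq : ln (1 - p) = - lam by rewrite /lam ln_Rinv; [ring | lra].
have hexp : exp (- lam) = 1 - p by rewrite -hlnq exp_ln; lra.
have [L0 [hL0 H]] := AN M (conj hp0 hp1) hlam hexp.
set e0 := exp (lam * L0).
have he0 : 0 < e0 by apply: exp_pos.
have [hup1 hup2] := archimed e0.
have hup0 : (0 <= up e0)%Z by apply: le_IZR; lra.
exists (Z.to_nat (up e0)) => n hn.
have hn' : e0 <= INR n.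
  apply: Rle_trans (_ : INR (Z.to_nat (up e0)) <= _).
    rewrite INR_IZR_INZ Z2Nat.id //; lra.
  apply: le_INR; exact/leP.
have hnpos : 0 < INR n by lra.
set L := ln (INR n) / lam.
have hlamL : lam * L = ln (INR n) by rewrite /L; field; lra.
have hL : L0 <= L.
  have : lam * L0 <= lam * L.
    rewrite hlamL -(ln_exp (lam * L0)); apply: ln_le' => //.
  nra.
set z := L - ln (L * (lam * L)) / lam.
have hcz : c_of p n = (up z + 1)%Z.
  rewrite /c_of /floorR /logb -/lam -/L -hlamL -/z; ring.
have [hz1 hz2] := archimed z.
have hcpos : (0 <= up z + 1)%Z.
  have hz0 : 0 <= z.
    have := H L (IZR (up z + 1)) hL.
    rewrite plus_IZR -/z => H'.
    have [] := H' ltac:(lra) ltac:(lra); done.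
  apply: le_IZR; rewrite plus_IZR; lra.
rewrite hcz.
set c := Z.to_nat (up z + 1).
have hcr : INR c = IZR (up z + 1) by rewrite /c INR_IZR_INZ Z2Nat.id.
have := H L (INR c) hL.
rewrite hcr plus_IZR -/z => H'.
have [_ [hc1 [hc2 [hc3 hG]]]] := H' ltac:(lra) ltac:(lra).
rewrite -plus_IZR -hcr hlamL exp_ln // in hc2 hc3 hG.
have hpc : (1 - p) ^ c = exp (- lam * INR c).
  rewrite pow_exp; last lra.
  congr exp; rewrite hlnq; ring.
rewrite -hpc in hc3 hG.
have hc1' : (1 <= c)%N.
  apply/leP; apply: INR_le; rewrite -plus_IZR -hcr in hc1; rewrite /=; lra.
have hcomb := combo hc1' hc2 (conj hp0 hp1) hc3.
have hGe := exp_ineq1_le (INR c * ln (INR n - INR c) - 2 * INR c * ln (INR c)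
       - INR n * ((1 - p) ^ c + 2 * ((1 - p) ^ c) ^ 2)).
have hfin : M < INR 'C(n, c) * ((1 - (1 - p) ^ c) ^ (n - c) * (/ INR c) ^ c) by lra.
clear -hfin hc1' hp0 hp1.
move: hc1' hfin; case: c => [//|m] _ hfin.
have hEX := EX_bound n m (conj hp0 hp1).
lra.
Qed.
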